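(* Let $p:\mathcal{T}_n\to[0,1]$ be any probability distribution on $\mathcal{T}_n$ that is invariant under relabelings of the leaves, and let $E$ denote expected value with respect to $p$ (for $D_n^2$, the two trees being chosen independently according to $p$). Then $$E(D_n^2)=2E(\overline\Phi^{(2)}_n)-2\cdot\frac{E(S_n)^2}{n}-4\cdot\frac{E(\Phi_n)^2}{n(n-1)}.$$
   Context: A phylogenetic tree with $n$ leaves is a fully resolved (binary) rooted tree with leaves bijectively labeled by $\{1,\dots,n\}$; $\mathcal{T}_n$ is the set of such trees. $\delta_T(i)$ is the depth (number of arcs from the root) of leaf $i$; for $i\ne j$, $\varphi_T(i,j)$ is the depth of the lowest common ancestor of leaves $i,j$; $\varphi_T(i,i)=\delta_T(i)$. $d_{\varphi,2}(T_1,T_2)=\sqrt{\sum_{1\le i\le j\le n}(\varphi_{T_1}(i,j)-\varphi_{T_2}(i,j))^2}$, and $D_n^2$ is the random variable $d_{\varphi,2}(T,T')^2$ for a random pair $(T,T')$. $S_n$, $\Phi_n$, $\overline\Phi^{(2)}_n$ are the random variables on $\mathcal{T}_n$ giving respectively the Sackin index $S(T)=\sum_{i=1}^n\delta_T(i)$, the total cophenetic index $\Phi(T)=\sum_{1\le i<j\le n}\varphi_T(i,j)$, and $\overline\Phi^{(2)}(T)=\sum_{1\le i\le j\le n}\varphi_T(i,j)^2$. *)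

(* Defs.v *)
From HB Require Import structures.
From mathcomp Require Import all_boot all_order all_algebra.
From mathcomp Require Import fingroup perm.
Set Implicit Arguments. Unset Strict Implicit. Unset Printing Implicit Defensive.
Import Order.TTheory GRing.Theory Num.Theory.

(* Leaves are labelled by 'I_n (i.e. {0,...,n-1} instead of {1,...,n}).
   A rooted tree with leaf set 'I_n is represented by its set of clusters:
   one cluster (set of descendant leaves) per node. *)
Definition compatible (n : nat) (A B : {set 'I_n}) : bool :=
  [|| A \subset B, B \subset A | [disjoint A & B]].

Definition is_phylo (n : nat) (T : {set {set 'I_n}}) : bool :=
  [&& [set: 'I_n] \in T,
      [forall i : 'I_n, [set i] \in T],
      set0 \notin T,
      [forall A in T, forall B in T, compatible A B] &
      [forall A in T, (1 < #|A|)%N ==>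
         [exists B in T, exists C in T,
            [&& B != set0, C != set0, [disjoint B & C] & A == B :|: C]]]].

(* phi_T(i,j) = depth of the lowest common ancestor of i and j
   = (number of clusters containing both i and j) - 1; phi_T(i,i) = delta_T(i). *)
Definition phi (n : nat) (T : {set {set 'I_n}}) (i j : 'I_n) : nat :=
  (#|[set A in T | (i \in A) && (j \in A)]|).-1.

Definition delta (n : nat) (T : {set {set 'I_n}}) (i : 'I_n) : nat := phi T i i.

Definition sackin (n : nat) (T : {set {set 'I_n}}) : nat :=
  \sum_(i : 'I_n) delta T i.
Definition cophenetic (n : nat) (T : {set {set 'I_n}}) : nat :=
  \sum_(i : 'I_n) \sum_(j : 'I_n | (i < j)%N) phi T i j.
Definition phibar2 (n : nat) (T : {set {set 'I_n}}) : nat :=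
  \sum_(i : 'I_n) \sum_(j : 'I_n | (i <= j)%N) (phi T i j) ^ 2.

Definition dphi2_sq (R : numDomainType) (n : nat) (T1 T2 : {set {set 'I_n}}) : R :=
  (\sum_(i : 'I_n) \sum_(j : 'I_n | (i <= j)%N)
     ((phi T1 i j)%:R - (phi T2 i j)%:R) ^+ 2)%R.

Definition relabel (n : nat) (s : {perm 'I_n}) (T : {set {set 'I_n}}) : {set {set 'I_n}} :=
  [set [set s x | x in A] | A : {set 'I_n} in T].

Definition invariant_distribution (R : numDomainType) (n : nat)
    (p : {set {set 'I_n}} -> R) : Prop :=
  [/\ forall T, (0 <= p T)%R,
      forall T, ~~ is_phylo T -> p T = 0%R,
      (\sum_(T : {set {set 'I_n}}) p T)%R = 1%R &
      forall (s : {perm 'I_n}) T, p (relabel s T) = p T].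

Definition expect (R : numDomainType) (n : nat) (p : {set {set 'I_n}} -> R)
    (f : {set {set 'I_n}} -> nat) : R :=
  (\sum_(T : {set {set 'I_n}}) p T * (f T)%:R)%R.

Definition expect_D2 (R : numDomainType) (n : nat) (p : {set {set 'I_n}} -> R) : R :=
  (\sum_(T1 : {set {set 'I_n}}) \sum_(T2 : {set {set 'I_n}})
     p T1 * p T2 * dphi2_sq R T1 T2)%R.

(* Main.v *)
Require Import Defs.
From mathcomp Require Import all_boot all_order all_algebra.
From mathcomp Require Import fingroup perm.
From mathcomp Require Import ring zify.
Import Order.TTheory GRing.Theory Num.Theory.
Local Open Scope ring_scope.

Section Aux.
Variable n : nat.
Implicit Types (s : {perm 'I_n}) (T : {set {set 'I_n}}).

Lemma relabelK s : cancel (relabel s) (relabel s^-1).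
Proof.
move=> T; rewrite /relabel -imset_comp.
rewrite -[RHS]imset_id; apply: eq_imset => A /=.
rewrite -imset_comp -[RHS]imset_id; apply: eq_imset => x /=.
by rewrite permK.
Qed.

Lemma relabel_inj s : injective (relabel s).
Proof. exact: can_inj (relabelK s). Qed.

Lemma phi_relabel s T i j : phi (relabel s T) (s i) (s j) = phi T i j.
Proof.
rewrite /phi; congr (_.-1).
have -> : [set A in relabel s T | (s i \in A) && (s j \in A)] =
  [set [set s x | x in A] | A : {set 'I_n} in [set A in T | (i \in A) && (j \in A)]].
  apply/setP => B; rewrite inE; apply/andP/imsetP.
    case=> /imsetP [A AT ->]; rewrite !mem_imset; try exact: perm_inj.
    by move=> H; exists A => //; rewrite inE AT.
  case=> A; rewrite inE => /andP [AT H] ->; split.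
    by apply/imsetP; exists A.
  by rewrite !mem_imset //; exact: perm_inj.
by rewrite card_imset //; apply: imset_inj; exact: perm_inj.
Qed.

Lemma phiC T i j : phi T i j = phi T j i.
Proof.
rewrite /phi; congr (_.-1); apply: eq_card => A.
by rewrite !inE (andbC (i \in A)).
Qed.

End Aux.

Section Main.
Variables (R : realFieldType) (n : nat) (p : {set {set 'I_n}} -> R).
Local Notation TT := {set {set 'I_n}}.

Definition ee (i j : 'I_n) : R := \sum_(T : TT) p T * (phi T i j)%:R.
Definition vv (i j : 'I_n) : R := \sum_(T : TT) p T * (phi T i j)%:R ^+ 2.

Lemma swap3 (F : TT -> 'I_n -> 'I_n -> R) (Q : 'I_n -> 'I_n -> bool) :
  \sum_(T : TT) \sum_(i : 'I_n) \sum_(j : 'I_n | Q i j) F T i j =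
  \sum_(i : 'I_n) \sum_(j : 'I_n | Q i j) \sum_(T : TT) F T i j.
Proof.
rewrite exchange_big; apply: eq_bigr => i _.
by rewrite exchange_big.
Qed.

Lemma var_lemma (x : TT -> R) : \sum_(T : TT) p T = 1 ->
  \sum_(a : TT) \sum_(b : TT) p a * p b * (x a - x b) ^+ 2 =
  2 * (\sum_(T : TT) p T * x T ^+ 2) - 2 * (\sum_(T : TT) p T * x T) ^+ 2.
Proof.
move=> H1.
transitivity (\sum_(a : TT) \sum_(b : TT)
   ((p a * x a ^+ 2) * p b + p a * (p b * x b ^+ 2)
    - (2 * (p a * x a)) * (p b * x b))).
  by apply: eq_bigr => a _; apply: eq_bigr => b _; ring.
under eq_bigr do rewrite big_split /= sumrN big_split /=.
rewrite big_split /= sumrN big_split /=.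
rewrite -!big_distrlr /= -mulr_sumr H1.
ring.
Qed.


Lemma D2E : \sum_(T : TT) p T = 1 ->
  expect_D2 p = \sum_(i : 'I_n) \sum_(j : 'I_n | (i <= j)%N) (2 * vv i j - 2 * ee i j ^+ 2).
Proof.
move=> H1; rewrite /expect_D2 /dphi2_sq.
transitivity (\sum_(T1 : TT) \sum_(T2 : TT) \sum_(i : 'I_n) \sum_(j : 'I_n | (i <= j)%N)
   p T1 * p T2 * ((phi T1 i j)%:R - (phi T2 i j)%:R) ^+ 2).
  apply: eq_bigr => T1 _; apply: eq_bigr => T2 _; rewrite mulr_sumr.
  by apply: eq_bigr => i _; rewrite mulr_sumr.
under eq_bigr do rewrite swap3.
rewrite swap3; apply: eq_bigr => i _; apply: eq_bigr => j _.
by rewrite (var_lemma (fun T => (phi T i j)%:R)).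
Qed.

Lemma phibar2E : expect p (@phibar2 n) = \sum_(i : 'I_n) \sum_(j : 'I_n | (i <= j)%N) vv i j.
Proof.
rewrite /expect /phibar2.
transitivity (\sum_(T : TT) \sum_(i : 'I_n) \sum_(j : 'I_n | (i <= j)%N)
   p T * (phi T i j)%:R ^+ 2).
  apply: eq_bigr => T _; rewrite natr_sum mulr_sumr; apply: eq_bigr => i _.
  by rewrite natr_sum mulr_sumr; apply: eq_bigr => j _; rewrite natrX.
by rewrite swap3.
Qed.

Lemma copheneticE : expect p (@cophenetic n) = \sum_(i : 'I_n) \sum_(j : 'I_n | (i < j)%N) ee i j.
Proof.
rewrite /expect /cophenetic.
transitivity (\sum_(T : TT) \sum_(i : 'I_n) \sum_(j : 'I_n | (i < j)%N)
   p T * (phi T i j)%:R).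
  apply: eq_bigr => T _; rewrite natr_sum mulr_sumr; apply: eq_bigr => i _.
  by rewrite natr_sum mulr_sumr.
by rewrite swap3.
Qed.

Lemma sackinE : expect p (@sackin n) = \sum_(i : 'I_n) ee i i.
Proof.
rewrite /expect /sackin.
transitivity (\sum_(T : TT) \sum_(i : 'I_n) p T * (phi T i i)%:R).
  by apply: eq_bigr => T _; rewrite natr_sum mulr_sumr.
by rewrite exchange_big.
Qed.

Lemma ee_perm (s : {perm 'I_n}) i j : (forall s T, p (relabel s T) = p T) -> ee (s i) (s j) = ee i j.
Proof.
move=> H4; rewrite /ee (reindex_inj (@relabel_inj n s)) /=.
by apply: eq_bigr => T _; rewrite H4 phi_relabel.
Qed.

Lemma eeC i j : ee i j = ee j i.
Proof. by apply: eq_bigr => T _; rewrite phiC. Qed.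

End Main.
Arguments ee {R n} p i j.
Arguments vv {R n} p i j.
Arguments ee_perm {R n p}.
Arguments eeC {R n p}.
Arguments D2E {R n p}.
Arguments sackinE {R n p}.
Arguments copheneticE {R n p}.
Arguments phibar2E {R n p}.

Lemma count_pairs n :
  ((\sum_(i < n) \sum_(j < n | (i < j)%N) 1) * 2 = n * n.-1)%N.
Proof.
elim: n => [|n IH]; first by rewrite big_ord0.
rewrite big_ord_recr /=.
rewrite [X in (_ + X)%N]big1; last first.
  by move=> j /= H; have := ltn_ord j; lia.
have -> : (\sum_(i < n) \sum_(j < n.+1 | (widen_ord (leqnSn n) i < j)%N) 1
   = \sum_(i < n) (\sum_(j < n | (i < j)%N) 1 + 1))%N.
  apply: eq_bigr => i _; rewrite big_mkcond big_ord_recr /= -big_mkcond /=.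
  by rewrite ltn_ord.
rewrite big_split /= sum1_card card_ord addn0.
move: IH; case: n => [|n] /=; lia.
Qed.

Lemma split_le (R : realFieldType) n (F : 'I_n -> 'I_n -> R) :
  \sum_(i : 'I_n) \sum_(j : 'I_n | (i <= j)%N) F i j =
  \sum_(i : 'I_n) F i i + \sum_(i : 'I_n) \sum_(j : 'I_n | (i < j)%N) F i j.
Proof.
rewrite -big_split; apply: eq_bigr => i _; rewrite (bigD1 i) //=.
congr (_ + _); apply: eq_bigl => j.
by rewrite ltn_neqAle andbC eq_sym.
Qed.

Lemma const_sq (R : realFieldType) n (f : 'I_n -> R) :
  (forall i k, f i = f k) ->
  \sum_(i : 'I_n) f i ^+ 2 = (\sum_(i : 'I_n) f i) ^+ 2 / n%:R.
Proof.
case: n f => [|m] f Hf; first by rewrite !big_ord0 exprS !mul0r.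
have -> : \sum_(i : 'I_m.+1) f i ^+ 2 = \sum_(i : 'I_m.+1) f ord0 ^+ 2.
  by apply: eq_bigr => i _; rewrite (Hf i ord0).
have -> : \sum_(i : 'I_m.+1) f i = \sum_(i : 'I_m.+1) f ord0.
  by apply: eq_bigr => i _; rewrite (Hf i ord0).
rewrite !sumr_const card_ord -(mulr_natr (f ord0 ^+ 2)) -(mulr_natr (f ord0)).
have : (m.+1%:R : R) != 0 by rewrite pnatr_eq0.
move: (m.+1%:R : R) => k hk; by field.
Qed.

Lemma const_pairs (R : realFieldType) n (g : 'I_n -> 'I_n -> R) :
  (forall i j i' j' : 'I_n, (i < j)%N -> (i' < j')%N -> g i j = g i' j') ->
  \sum_(i : 'I_n) \sum_(j : 'I_n | (i < j)%N) g i j ^+ 2 =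
  2 * (\sum_(i : 'I_n) \sum_(j : 'I_n | (i < j)%N) g i j) ^+ 2 / (n%:R * (n%:R - 1)).
Proof.
case: n g => [|[|m]] g Hg.
- by rewrite !big_ord0 exprS !mul0r mulr0 mul0r.
- have E : forall F : 'I_1 -> 'I_1 -> R,
      \sum_(i : 'I_1) \sum_(j : 'I_1 | (i < j)%N) F i j = 0.
    by move=> F; apply: big1 => i _; apply: big1 => j; rewrite (ord1 i) (ord1 j).
  by rewrite !E exprS !mul0r mulr0 mul0r.
set g0 := g ord0 ord_max.
have Hc : forall x : R, \sum_(i : 'I_m.+2) \sum_(j : 'I_m.+2 | (i < j)%N) x =
    x * (\sum_(i < m.+2) \sum_(j < m.+2 | (i < j)%N) 1)%N%:R.
  move=> x; rewrite natr_sum mulr_sumr; apply: eq_bigr => i _.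
  by rewrite natr_sum mulr_sumr; apply: eq_bigr => j _; rewrite mulr1.
have -> : \sum_(i : 'I_m.+2) \sum_(j : 'I_m.+2 | (i < j)%N) g i j ^+ 2 =
    \sum_(i : 'I_m.+2) \sum_(j : 'I_m.+2 | (i < j)%N) g0 ^+ 2.
  by apply: eq_bigr => i _; apply: eq_bigr => j H; rewrite (Hg i j ord0 ord_max).
have -> : \sum_(i : 'I_m.+2) \sum_(j : 'I_m.+2 | (i < j)%N) g i j =
    \sum_(i : 'I_m.+2) \sum_(j : 'I_m.+2 | (i < j)%N) g0.
  by apply: eq_bigr => i _; apply: eq_bigr => j H; rewrite (Hg i j ord0 ord_max).
rewrite !Hc.
have Hcnt := count_pairs m.+2.
set c := (\sum_(i < m.+2) \sum_(j < m.+2 | (i < j)%N) 1)%N in Hcnt *.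
have HcR : (c%:R : R) * 2 = m.+2%:R * (m.+2%:R - 1).
  have -> : (m.+2%:R : R) - 1 = m.+1%:R by rewrite mulrSr addrK.
  by rewrite -natrM Hcnt natrM.
have cpos : c != 0%N by apply/eqP => c0; rewrite c0 in Hcnt.
have cR : (c%:R : R) != 0 by rewrite pnatr_eq0.
rewrite -HcR; move: (c%:R : R) cR => cr cR; by field.
Qed.

Theorem proposition4 (R : realFieldType) (n : nat) (p : {set {set 'I_n}} -> R) :
  invariant_distribution p ->
  expect_D2 p =
    2 * expect p (@phibar2 n)
    - 2 * (expect p (@sackin n) ^+ 2 / n%:R)
    - 4 * (expect p (@cophenetic n) ^+ 2 / (n%:R * (n%:R - 1))).
Proof.
case=> _ _ H1 H4.
rewrite D2E // phibar2E sackinE copheneticE.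
have -> : \sum_(i : 'I_n) \sum_(j : 'I_n | (i <= j)%N)
    (2 * vv p i j - 2 * ee p i j ^+ 2) =
  2 * \sum_(i : 'I_n) \sum_(j : 'I_n | (i <= j)%N) vv p i j -
  2 * \sum_(i : 'I_n) \sum_(j : 'I_n | (i <= j)%N) ee p i j ^+ 2.
  rewrite !mulr_sumr -sumrB; apply: eq_bigr => i _.
  by rewrite !mulr_sumr -sumrB.
rewrite (@split_le _ _ (fun i j => ee p i j ^+ 2)) /=.
have L1 : forall x y z : 'I_n, x != z -> y != z -> ee p x z = ee p y z.
  move=> x y z hx hy.
  by rewrite -(ee_perm (tperm x y) x z H4) tpermL tpermD.
have Hd : forall i k : 'I_n, ee p i i = ee p k k.
  by move=> i k; rewrite -(ee_perm (tperm i k) i i H4) tpermL.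
have Ho : forall i j i' j' : 'I_n, (i < j)%N -> (i' < j')%N -> ee p i j = ee p i' j'.
  move=> i j i' j' hij hij'.
  have nij : i != j by apply/eqP => E; move: hij; rewrite E ltnn.
  have nij' : i' != j' by apply/eqP => E; move: hij'; rewrite E ltnn.
  case: (eqVneq i' j) => [E|ne].
    rewrite (L1 i j' j) //; last by rewrite -E eq_sym.
    by rewrite eeC E.
  rewrite (L1 i i' j) // (eeC i' j) (L1 j j' i') ?(eeC j' i') //.
    by rewrite eq_sym.
  by rewrite eq_sym.
rewrite (@const_sq _ _ _ Hd) (@const_pairs _ _ _ Ho).
ring.
Qed.
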